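(* Let $u,v:\mathbb R\to\mathbb R^2$ be smooth $2\pi$-periodic maps with $[u(t),v(t)]=1$ and $u(t+2\pi/3)=v(t)$, $v(t+2\pi/3)=-u(t)-v(t)$ for all $t$. Let $c:\mathbb R\to\mathbb R^2$ be a $C^1$ curve such that the triangle $w_1(t)=u(t)+c(t)$, $w_2(t)=v(t)+c(t)$, $w_3(t)=-u(t)-v(t)+c(t)$ is horizontal, i.e. $[w_2-w_1,w_3']=[w_3-w_2,w_1']=[w_1-w_3,w_2']=0$ for all $t$. Set $p=[u,u']$, $q=[v,v']$, $r=[u',v]=[v',u]$. Then $$c'(t)=\tfrac13\big(p(t)-2q(t)+2r(t)\big)v(t)-\tfrac13\big(q(t)-2p(t)+2r(t)\big)u(t).$$ Furthermore, the monodromy condition $(w_1,w_2,w_3)(t+2\pi/3)=(w_2,w_3,w_1)(t)$ for all $t$ holds if and only if $$\int_0^{2\pi}\big(p-2q+2r\big)v-\big(q-2p+2r\big)u\,dt=0,$$ or, equivalently, if and only if $\int_0^{2\pi}[u'(t),v(t)]\,(v(t)-u(t))\,dt=0$.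
   Context: $[\cdot,\cdot]$ is the determinant of two plane vectors; primes denote derivatives in $t$. The triangle $(w_1,w_2,w_3)$ has centroid $c$ and oriented area $3/2$. *)

(* Defs.v *)
From Stdlib Require Import Reals.
From Coquelicot Require Import Coquelicot.
Open Scope R_scope.

Definition det2 (a1 a2 b1 b2 : R) : R := a1 * b2 - a2 * b1.

Definition smooth (f : R -> R) : Prop := forall (n : nat) (t : R), ex_derive_n f n t.

Definition is_C1 (f : R -> R) : Prop :=
  (forall t, ex_derive f t) /\ (forall t, continuous (Derive f) t).

(* Main.v *)
Require Import Defs.
From Stdlib Require Import Reals Lra.
From Coquelicot Require Import Coquelicot.
Open Scope R_scope.


Definition Cont (f : R -> R) := forall x, continuous f x.

Lemma cplus f g : Cont f -> Cont g -> Cont (fun y => f y + g y).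
Proof. intros Hf Hg x. exact (continuous_plus f g x (Hf x) (Hg x)). Qed.
Lemma cminus f g : Cont f -> Cont g -> Cont (fun y => f y - g y).
Proof. intros Hf Hg x. exact (continuous_minus f g x (Hf x) (Hg x)). Qed.
Lemma cmult f g : Cont f -> Cont g -> Cont (fun y => f y * g y).
Proof. intros Hf Hg x. exact (continuous_mult f g x (Hf x) (Hg x)). Qed.
Lemma copp f : Cont f -> Cont (fun y => - f y).
Proof. intros Hf x. exact (continuous_opp f x (Hf x)). Qed.
Lemma cconst c : Cont (fun _ => c).
Proof. intros x. apply continuous_const. Qed.
Lemma cshift f a : Cont f -> Cont (fun y => f (y + a)).
Proof. intros Hf x. apply (continuous_comp (fun y => y + a) f).
  apply (continuous_plus (fun y => y) (fun _ => a)). apply continuous_id. apply continuous_const.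
  apply Hf. Qed.

Lemma ex_cont (f : R -> R) x : ex_derive f x -> continuous f x.
Proof. apply (@ex_derive_continuous R_AbsRing R_NormedModule). Qed.

Ltac cont := repeat match goal with
 | |- Cont (fun _ => ?c) => apply cconst
 | |- Cont (fun y => _ + _) => apply cplus
 | |- Cont (fun y => _ - _) => apply cminus
 | |- Cont (fun y => _ * _) => apply cmult
 | |- Cont (fun y => - _) => apply copp
 | |- Cont _ => assumption
 end.

Lemma exR f a b : Cont f -> ex_RInt f a b.
Proof. intros Hf. apply (@ex_RInt_continuous R_CompleteNormedModule). intros; apply Hf. Qed.

Lemma RInt_shift f a b c : Cont f ->
  RInt (fun x => f (x + c)) a b = RInt f (a + c) (b + c).
Proof.
  intros Hf. rewrite <- (RInt_ext (fun y => scal 1 (f (1 * y + c)))).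
  - rewrite (@RInt_comp_lin R_CompleteNormedModule). f_equal; ring. replace (1*a+c) with (a+c) by ring.
    replace (1*b+c) with (b+c) by ring. apply exR; auto.
  - intros x _. unfold scal; simpl; unfold mult; simpl. rewrite !Rmult_1_l. reflexivity.
Qed.

Lemma RInt_periodic f P a : Cont f -> (forall x, f (x + P) = f x) ->
  RInt f a (a + P) = RInt f 0 P.
Proof.
  intros Hf Hp.
  rewrite <- (RInt_Chasles f a P (a + P)) by (apply exR; auto).
  assert (E : RInt f P (a + P) = RInt f 0 a).
  { replace P with (0 + P) at 1 by ring. rewrite <- (RInt_shift f 0 a P) by auto.
    apply RInt_ext. intros x _. apply Hp. }
  rewrite E. change (plus (RInt f a P) (RInt f 0 a)) with (RInt f a P + RInt f 0 a).
  rewrite Rplus_comm.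
  change (RInt f 0 a + RInt f a P) with (plus (RInt f 0 a) (RInt f a P)).
  apply RInt_Chasles; apply exR; auto.
Qed.

Lemma RInt_plusR f g a b : Cont f -> Cont g ->
  RInt (fun x => f x + g x) a b = RInt f a b + RInt g a b.
Proof. intros. apply (@RInt_plus R_CompleteNormedModule f g); apply exR; auto. Qed.
Lemma RInt_minusR f g a b : Cont f -> Cont g ->
  RInt (fun x => f x - g x) a b = RInt f a b - RInt g a b.
Proof. intros. apply (@RInt_minus R_CompleteNormedModule f g); apply exR; auto. Qed.
Lemma RInt_scalR f k a b : Cont f ->
  RInt (fun x => k * f x) a b = k * RInt f a b.
Proof. intros. apply (@RInt_scal R_CompleteNormedModule f a b k); apply exR; auto. Qed.

Lemma Derive_shift (f : R -> R) (a : R) (g : R -> R) (t : R) : (forall x, ex_derive f x) -> (forall s, g s = f (s + a)) ->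
  Derive g t = Derive f (t + a).
Proof.
  intros Hd Hg. rewrite (Derive_ext g (fun s => f (s + a))) by auto.
  apply is_derive_unique. auto_derive. auto. apply Rmult_1_l.
Qed.
Lemma alg (u1 u2 v1 v2 du1 du2 dv1 dv2 D1 D2 : R) :
  u1*v2 - u2*v1 = 1 -> du1*v2 + u1*dv2 - du2*v1 - u2*dv1 = 0 ->
  (-u1 - 2*v1)*(du2 + D2) - (-u2 - 2*v2)*(du1 + D1) = 0 ->
  (2*u1 + v1)*(dv2 + D2) - (2*u2 + v2)*(dv1 + D1) = 0 ->
  D1 = 1/3*((u1*du2 - u2*du1) - 2*(v1*dv2 - v2*dv1) + 2*(du1*v2 - du2*v1))*v1
       - 1/3*((v1*dv2 - v2*dv1) - 2*(u1*du2 - u2*du1) + 2*(du1*v2 - du2*v1))*u1 /\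
  D2 = 1/3*((u1*du2 - u2*du1) - 2*(v1*dv2 - v2*dv1) + 2*(du1*v2 - du2*v1))*v2
       - 1/3*((v1*dv2 - v2*dv1) - 2*(u1*du2 - u2*du1) + 2*(du1*v2 - du2*v1))*u2.
Proof.
  intros H He E2 E3.
  set (a := 1/3*((u1*du2 - u2*du1) - 2*(v1*dv2 - v2*dv1) + 2*(du1*v2 - du2*v1))).
  set (b := 1/3*((v1*dv2 - v2*dv1) - 2*(u1*du2 - u2*du1) + 2*(du1*v2 - du2*v1))).
  assert (hU : u1*D2 - u2*D1 = a) by (unfold a; lra).
  assert (hV : v1*D2 - v2*D1 = b) by (unfold b; lra).
  split.
  - transitivity (D1 * (u1*v2 - u2*v1)). rewrite H; ring.
    transitivity (v1 * (u1*D2 - u2*D1) - u1 * (v1*D2 - v2*D1)). ring.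
    rewrite hU, hV. ring.
  - transitivity (D2 * (u1*v2 - u2*v1)). rewrite H; ring.
    transitivity (v2 * (u1*D2 - u2*D1) - u2 * (v1*D2 - v2*D1)). ring.
    rewrite hU, hV. ring.
Qed.

Lemma component (U V C p q r : R -> R) (T P : R) :
  P = 3 * T ->
  Cont U -> Cont V -> Cont p -> Cont q -> Cont r ->
  (forall x, ex_derive C x) -> Cont (Derive C) ->
  (forall t, U (t + T) = V t) -> (forall t, V (t + T) = - U t - V t) ->
  (forall t, p (t + T) = q t) -> (forall t, q (t + T) = p t + q t - 2 * r t) ->
  (forall t, r (t + T) = q t - r t) ->
  (forall t, Derive C t = 1 / 3 * (p t - 2 * q t + 2 * r t) * V t
                          - 1 / 3 * (q t - 2 * p t + 2 * r t) * U t) ->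
  ((forall t, C (t + T) = C t) <->
    RInt (fun t => (p t - 2 * q t + 2 * r t) * V t - (q t - 2 * p t + 2 * r t) * U t) 0 P = 0) /\
  RInt (fun t => (p t - 2 * q t + 2 * r t) * V t - (q t - 2 * p t + 2 * r t) * U t) 0 P
  = 3 * RInt (fun t => r t * (V t - U t)) 0 P.
Proof.
  intros HP cU cV cp cq cr dC cDC UT VT pT qT rT DC.
  set (G := fun t => (p t - 2 * q t + 2 * r t) * V t - (q t - 2 * p t + 2 * r t) * U t).
  assert (cG : Cont G) by (unfold G; cont).
  assert (GT : forall x, G (x + T) = G x).
  { intros x; unfold G; rewrite UT, VT, pT, qT, rT; ring. }
  assert (H1 : forall t, C (t + T) - C t = 1 / 3 * RInt G 0 T).
  { intros t. rewrite <- RInt_Derive by (intros; auto).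
    rewrite <- (RInt_periodic G T t) by auto.
    rewrite <- RInt_scalR by auto. apply RInt_ext. intros x _. change (@eq R (Derive C x) (1/3 * G x)). rewrite DC. unfold G. ring. }
  assert (H2 : RInt G 0 P = 3 * RInt G 0 T).
  { rewrite HP. replace (3 * T) with (T + T + T) by ring.
    rewrite <- (RInt_Chasles G 0 (T + T) (T + T + T)) by (apply exR; auto).
    rewrite <- (RInt_Chasles G 0 T (T + T)) by (apply exR; auto).
    change (RInt G 0 T + RInt G T (T + T) + RInt G (T + T) (T + T + T) = 3 * RInt G 0 T).
    rewrite !RInt_periodic by auto. ring. }
  split.
  - split.
    + intros Hc. rewrite H2. specialize (H1 0). rewrite Hc in H1. lra.
    + intros HI t. specialize (H1 t). rewrite H2 in HI. lra.
  - set (Y := fun t => 2 * p t * U t + p t * V t - r t * U t - 2 * r t * V t).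
    assert (cY : Cont Y) by (unfold Y; cont).
    assert (Y3 : forall x, Y (x + P) = Y x).
    { intros x. rewrite HP. replace (x + 3 * T) with (x + T + T + T) by ring.
      unfold Y. do 3 rewrite ?UT, ?VT, ?pT, ?qT, ?rT.
      ring. }
    assert (E : RInt (fun x => Y (x + T)) 0 P = RInt Y 0 P).
    { rewrite RInt_shift by auto. rewrite Rplus_0_l, Rplus_comm. apply RInt_periodic; auto. }
    transitivity (RInt (fun x => (Y x - Y (x + T)) + 3 * (r x * (V x - U x))) 0 P).
    { apply RInt_ext. intros x _. simpl. unfold G, Y. rewrite ?UT, ?VT, ?pT, ?qT, ?rT. ring. }
    rewrite RInt_plusR, RInt_minusR, RInt_scalR, E.
    match goal with |- ?a = ?b => change (@eq R a b) end; ring. all: try (apply cshift; auto). all: cont.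
    all: try (apply cshift; auto). all: unfold Y; cont.
Qed.

Theorem proposition4p3 (u1 u2 v1 v2 c1 c2 : R -> R) :
  smooth u1 -> smooth u2 -> smooth v1 -> smooth v2 ->
  (forall t, u1 (t + 2 * PI) = u1 t /\ u2 (t + 2 * PI) = u2 t) ->
  (forall t, v1 (t + 2 * PI) = v1 t /\ v2 (t + 2 * PI) = v2 t) ->
  (forall t, det2 (u1 t) (u2 t) (v1 t) (v2 t) = 1) ->
  (forall t, u1 (t + 2 * PI / 3) = v1 t /\ u2 (t + 2 * PI / 3) = v2 t) ->
  (forall t, v1 (t + 2 * PI / 3) = - u1 t - v1 t /\
             v2 (t + 2 * PI / 3) = - u2 t - v2 t) ->
  is_C1 c1 -> is_C1 c2 ->
  let w11 := fun s => u1 s + c1 s in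
  let w12 := fun s => u2 s + c2 s in
  let w21 := fun s => v1 s + c1 s in
  let w22 := fun s => v2 s + c2 s in
  let w31 := fun s => - u1 s - v1 s + c1 s in
  let w32 := fun s => - u2 s - v2 s + c2 s in
  (* horizontality *)
  (forall t, det2 (w21 t - w11 t) (w22 t - w12 t) (Derive w31 t) (Derive w32 t) = 0) ->
  (forall t, det2 (w31 t - w21 t) (w32 t - w22 t) (Derive w11 t) (Derive w12 t) = 0) ->
  (forall t, det2 (w11 t - w31 t) (w12 t - w32 t) (Derive w21 t) (Derive w22 t) = 0) ->
  let p := fun s => det2 (u1 s) (u2 s) (Derive u1 s) (Derive u2 s) in
  let q := fun s => det2 (v1 s) (v2 s) (Derive v1 s) (Derive v2 s) in
  let r := fun s => det2 (Derive u1 s) (Derive u2 s) (v1 s) (v2 s) in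
  let monodromy :=
    forall t,
      (w11 (t + 2 * PI / 3) = w21 t /\ w12 (t + 2 * PI / 3) = w22 t) /\
      (w21 (t + 2 * PI / 3) = w31 t /\ w22 (t + 2 * PI / 3) = w32 t) /\
      (w31 (t + 2 * PI / 3) = w11 t /\ w32 (t + 2 * PI / 3) = w12 t) in
  (* r = [u',v] = [v',u] *)
  (forall t, r t = det2 (Derive v1 t) (Derive v2 t) (u1 t) (u2 t)) /\
  (forall t,
     Derive c1 t = 1 / 3 * (p t - 2 * q t + 2 * r t) * v1 t
                   - 1 / 3 * (q t - 2 * p t + 2 * r t) * u1 t /\
     Derive c2 t = 1 / 3 * (p t - 2 * q t + 2 * r t) * v2 t
                   - 1 / 3 * (q t - 2 * p t + 2 * r t) * u2 t) /\
  (monodromy <->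
     RInt (fun t => (p t - 2 * q t + 2 * r t) * v1 t
                    - (q t - 2 * p t + 2 * r t) * u1 t) 0 (2 * PI) = 0 /\
     RInt (fun t => (p t - 2 * q t + 2 * r t) * v2 t
                    - (q t - 2 * p t + 2 * r t) * u2 t) 0 (2 * PI) = 0) /\
  (monodromy <->
     RInt (fun t => det2 (Derive u1 t) (Derive u2 t) (v1 t) (v2 t) * (v1 t - u1 t))
          0 (2 * PI) = 0 /\
     RInt (fun t => det2 (Derive u1 t) (Derive u2 t) (v1 t) (v2 t) * (v2 t - u2 t))
          0 (2 * PI) = 0).
Proof.
  intros su1 su2 sv1 sv2 _ _ hdet hUT hVT [dc1 cdc1] [dc2 cdc2] w11 w12 w21 w22 w31 w32
    Hh1 Hh2 Hh3 p q r mono.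
  set (T := 2 * PI / 3).
  fold T in hUT, hVT, mono.
  assert (du1 : forall x, ex_derive u1 x) by (intros x; exact (su1 1%nat x)).
  assert (du2 : forall x, ex_derive u2 x) by (intros x; exact (su2 1%nat x)).
  assert (dv1 : forall x, ex_derive v1 x) by (intros x; exact (sv1 1%nat x)).
  assert (dv2 : forall x, ex_derive v2 x) by (intros x; exact (sv2 1%nat x)).
  assert (ddu1 : Cont (Derive u1)) by (intros x; apply ex_cont; exact (su1 2%nat x)).
  assert (ddu2 : Cont (Derive u2)) by (intros x; apply ex_cont; exact (su2 2%nat x)).
  assert (ddv1 : Cont (Derive v1)) by (intros x; apply ex_cont; exact (sv1 2%nat x)).
  assert (ddv2 : Cont (Derive v2)) by (intros x; apply ex_cont; exact (sv2 2%nat x)).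
  assert (cu1 : Cont u1) by (intros x; apply ex_cont; auto).
  assert (cu2 : Cont u2) by (intros x; apply ex_cont; auto).
  assert (cv1 : Cont v1) by (intros x; apply ex_cont; auto).
  assert (cv2 : Cont v2) by (intros x; apply ex_cont; auto).
  assert (he : forall t, Derive u1 t * v2 t + u1 t * Derive v2 t
                        - Derive u2 t * v1 t - u2 t * Derive v1 t = 0).
  { intros t.
    assert (Hd : is_derive (fun s => u1 s * v2 s - u2 s * v1 s) t
       (Derive u1 t * v2 t + u1 t * Derive v2 t - Derive u2 t * v1 t - u2 t * Derive v1 t)).
    { auto_derive. repeat split; auto. try change (fun x : R => u1 x) with u1; try change (fun x : R => u2 x) with u2; try change (fun x : R => v1 x) with v1; try change (fun x : R => v2 x) with v2; ring. }
    apply is_derive_unique in Hd. rewrite <- Hd.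
    rewrite (Derive_ext _ (fun _ => 1)). apply Derive_const.
    intros s. rewrite <- (hdet s). unfold det2. ring. }
  assert (Du1T : forall t, Derive u1 (t + T) = Derive v1 t).
  { intros t. symmetry. apply Derive_shift; auto. intros s; symmetry; apply hUT. }
  assert (Du2T : forall t, Derive u2 (t + T) = Derive v2 t).
  { intros t. symmetry. apply Derive_shift; auto. intros s; symmetry; apply hUT. }
  assert (Dv1T : forall t, Derive v1 (t + T) = - Derive u1 t - Derive v1 t).
  { intros t. rewrite <- (Derive_shift v1 T (fun s => - u1 s - v1 s) t); auto.
    apply is_derive_unique. auto_derive. auto. try change (fun x : R => u1 x) with u1; try change (fun x : R => u2 x) with u2; try change (fun x : R => v1 x) with v1; try change (fun x : R => v2 x) with v2; ring.
    intros s; symmetry; apply hVT. }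
  assert (Dv2T : forall t, Derive v2 (t + T) = - Derive u2 t - Derive v2 t).
  { intros t. rewrite <- (Derive_shift v2 T (fun s => - u2 s - v2 s) t); auto.
    apply is_derive_unique. auto_derive. auto. try change (fun x : R => u1 x) with u1; try change (fun x : R => u2 x) with u2; try change (fun x : R => v1 x) with v1; try change (fun x : R => v2 x) with v2; ring.
    intros s; symmetry; apply hVT. }
  assert (part1 : forall t, r t = det2 (Derive v1 t) (Derive v2 t) (u1 t) (u2 t)).
  { intros t. unfold r, det2. specialize (he t). lra. }
  assert (part2 : forall t,
     Derive c1 t = 1 / 3 * (p t - 2 * q t + 2 * r t) * v1 t
                   - 1 / 3 * (q t - 2 * p t + 2 * r t) * u1 t /\
     Derive c2 t = 1 / 3 * (p t - 2 * q t + 2 * r t) * v2 t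
                   - 1 / 3 * (q t - 2 * p t + 2 * r t) * u2 t).
  { intros t. unfold p, q, r, det2. apply alg.
    - apply hdet.
    - apply he.
    - specialize (Hh2 t). unfold det2, w11, w12, w21, w22, w31, w32 in Hh2.
      rewrite !Derive_plus in Hh2 by auto. rewrite <- Hh2. ring.
    - specialize (Hh3 t). unfold det2, w11, w12, w21, w22, w31, w32 in Hh3.
      rewrite !Derive_plus in Hh3 by auto. rewrite <- Hh3. ring. }
  assert (cp : Cont p) by (unfold p, det2; cont).
  assert (cq : Cont q) by (unfold q, det2; cont).
  assert (cr : Cont r) by (unfold r, det2; cont).
  assert (pT : forall t, p (t + T) = q t).
  { intros t. unfold p, q, det2. rewrite Du1T, Du2T, (proj1 (hUT t)), (proj2 (hUT t)). ring. }
  assert (qT : forall t, q (t + T) = p t + q t - 2 * r t).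
  { intros t. unfold p, q, r, det2. rewrite Dv1T, Dv2T, (proj1 (hVT t)), (proj2 (hVT t)).
    specialize (he t). lra. }
  assert (rT : forall t, r (t + T) = q t - r t).
  { intros t. unfold q, r, det2. rewrite Du1T, Du2T, (proj1 (hVT t)), (proj2 (hVT t)).
    specialize (he t). lra. }
  assert (HP : 2 * PI = 3 * T) by (unfold T; field).
  destruct (component u1 v1 c1 p q r T (2 * PI) HP cu1 cv1 cp cq cr dc1 cdc1
     (fun t => proj1 (hUT t)) (fun t => proj1 (hVT t)) pT qT rT
     (fun t => proj1 (part2 t))) as [M1 I1].
  destruct (component u2 v2 c2 p q r T (2 * PI) HP cu2 cv2 cp cq cr dc2 cdc2
     (fun t => proj2 (hUT t)) (fun t => proj2 (hVT t)) pT qT rT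
     (fun t => proj2 (part2 t))) as [M2 I2].
  assert (Mono : mono <-> (forall t, c1 (t + T) = c1 t) /\ (forall t, c2 (t + T) = c2 t)).
  { unfold mono, w11, w12, w21, w22, w31, w32. split.
    - intros H. split; intros t; destruct (H t) as [[A1 A2] _];
        rewrite (proj1 (hUT t)) in A1; rewrite (proj2 (hUT t)) in A2; lra.
    - intros [H1 H2] t. rewrite (proj1 (hUT t)), (proj2 (hUT t)), (proj1 (hVT t)),
        (proj2 (hVT t)), H1, H2.
      replace (u1 (t + T)) with (v1 t) by (symmetry; apply hUT).
      replace (u2 (t + T)) with (v2 t) by (symmetry; apply hUT).
      repeat split; ring. }
  split; [exact part1 |]. split; [exact part2 |].
  split.
  - rewrite Mono, M1, M2. tauto.
  - rewrite Mono, M1, M2, I1, I2. change (RInt (fun t => r t * (v1 t - u1 t)) 0 (2 * PI)) with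
      (RInt (fun t => det2 (Derive u1 t) (Derive u2 t) (v1 t) (v2 t) * (v1 t - u1 t)) 0 (2 * PI)).
    change (RInt (fun t => r t * (v2 t - u2 t)) 0 (2 * PI)) with
      (RInt (fun t => det2 (Derive u1 t) (Derive u2 t) (v1 t) (v2 t) * (v2 t - u2 t)) 0 (2 * PI)).
    split; intros [A B]; split; lra.
Qed.
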